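(* Let $P$ be a finite graded poset with rank levels $P_1,\dots,P_d$ and full rank lower ideals $L_j=P_1\sqcup\cdots\sqcup P_j$ ($0\le j\le d$, $L_0=\emptyset$). Let $m\ge1$ and identify a lower ideal $I$ of $[m]\times P$ with $(I_1,\dots,I_m)$, $I_j=\{a\in P:(j,a)\in I\}$; call it full rank if every $I_j$ is one of $L_0,\dots,L_d$. Then a lower ideal $(I_1,\dots,I_m)$ of $[m]\times P$ is full rank if and only if every lower ideal in its orbit under $\mathfrak{X}_{[m]\times P}$ is full rank.
   Context: A finite poset is graded if all maximal chains have the same length; the rank function $r$ has minimal elements of rank $1$ and $r(x)=r(y)+1$ when $x$ covers $y$; $P_j=r^{-1}(j)$. $[m]\times P$ carries the product order. For a finite poset $Q$ and a lower ideal $I$, $\mathfrak{X}_Q(I)=\{y\in Q:y\le x\text{ for some }x\in\min(Q\setminus I)\}$; this is a bijection on lower ideals. *)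

(* Defs.v *)
From mathcomp Require Import all_boot all_order.
Set Implicit Arguments. Unset Strict Implicit. Unset Printing Implicit Defensive.
Import Order.Theory.
Local Open Scope order_scope.

Section PosetDefs.
Variables (disp : Order.disp_t) (P : finPOrderType disp).

Definition is_chain (C : {set P}) : bool :=
  [forall x in C, forall y in C, (x <= y) || (y <= x)].
Definition is_max_chain (C : {set P}) : bool :=
  is_chain C && [forall D : {set P}, (is_chain D && (C \subset D)) ==> (D == C)].
Definition graded : Prop :=
  forall C D : {set P}, is_max_chain C -> is_max_chain D -> #|C| = #|D|.

Definition covers (x y : P) : bool := (y < x) && [forall z, ~~ ((y < z) && (z < x))].
Definition is_minimal (x : P) : bool := [forall y, ~~ (y < x)].

Definition rank_fun (r : P -> nat) : Prop :=
  (forall x, is_minimal x -> r x = 1%N) /\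
  (forall x y, covers x y -> r x = (r y).+1).

Definition top_rank (r : P -> nat) : nat := \max_(a : P) r a.
Definition Lfull (r : P -> nat) (j : nat) : {set P} := [set a | (r a <= j)%N].

End PosetDefs.

Section Rowmotion.
Variables (T : finType) (le : rel T).
Definition lower_ideal (I : {set T}) : Prop :=
  forall x y, le y x -> x \in I -> y \in I.
Definition min_compl (I : {set T}) : {set T} :=
  [set x | (x \notin I) && [forall y, ((y \notin I) && le y x) ==> (y == x)]].
Definition Xmap (I : {set T}) : {set T} :=
  [set y | [exists x, (x \in min_compl I) && le y x]].
End Rowmotion.

(* product order on [m] x P, with [m] = 'I_m (levels 0..m-1) *)
Definition prodle (m : nat) (disp : Order.disp_t) (P : finPOrderType disp)
  (p q : 'I_m * P) : bool := ((p.1 <= q.1)%N && (p.2 <= q.2)%O).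

Definition slice (m : nat) (disp : Order.disp_t) (P : finPOrderType disp)
  (I : {set 'I_m * P}) (j : 'I_m) : {set P} := [set a | (j, a) \in I].

Definition full_rank (m : nat) (disp : Order.disp_t) (P : finPOrderType disp)
  (r : P -> nat) (I : {set 'I_m * P}) : Prop :=
  forall j : 'I_m, exists k : nat, (k <= top_rank r)%N /\ slice I j = Lfull r k.

(* Main.v *)
Require Import Defs.
From mathcomp Require Import all_boot all_order zify.
Set Implicit Arguments. Unset Strict Implicit. Unset Printing Implicit Defensive.
Import Order.Theory.
Local Open Scope order_scope.

Section Aux.
Variables (disp : Order.disp_t) (P : finPOrderType disp).

Lemma down_proper (b c : P) : b < c ->
  [set x | x <= b] \proper [set x | x <= c].
Proof.
move=> bc; apply/properP; split.
  apply/subsetP=> x; rewrite !inE => xb; exact: le_trans xb (ltW bc).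
exists c; rewrite !inE ?lexx //.
apply/negP=> cb; move: bc; rewrite lt_neqAle => /andP[/eqP ne bc].
by apply: ne; apply/le_anti; rewrite bc cb.
Qed.

Lemma cover_exists (y z : P) : y < z -> exists b, y <= b /\ covers z b.
Proof.
move=> yz.
have Sy : (y <= y) && (y < z) by rewrite lexx yz.
case: (@arg_maxnP P y (fun b => (y <= b) && (b < z)) (fun b => #|[set x | x <= b]|) Sy) => b /andP[yb bz] Hmax.
exists b; split => //; rewrite /covers bz /=.
apply/forallP=> c; apply/negP=> /andP[bc cz].
have := Hmax c; rewrite (le_trans yb (ltW bc)) cz => /(_ isT).
move=> h; have := proper_card (down_proper bc); by rewrite ltnNge; move: h => /= ->.
Qed.

Lemma max_above (y : P) : exists x, y <= x /\ forall v, ~~ (x < v).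
Proof.
have Sy : y <= y by rewrite lexx.
case: (@arg_maxnP P y (fun b => y <= b) (fun b => #|[set x | x <= b]|) Sy) => x yx Hmax.
exists x; split => // v; apply/negP=> xv.
move: (Hmax v (le_trans yx (ltW xv))) => /= h.
have := proper_card (down_proper xv); by rewrite ltnNge h.
Qed.

Variable r : P -> nat.
Hypothesis hr : rank_fun r.

Lemma rank_ge1 x : (1 <= r x)%N.
Proof.
case: hr => h1 h2.
case: (boolP (is_minimal x)) => [/h1 -> //|].
move=> /forallPn [y]; rewrite negbK => yx.
case: (cover_exists yx) => b [_ /h2 ->]; by [].
Qed.

Lemma rank_lt_n n : forall x y : P, (#|[set z | (z <= y)%O]| <= n)%N -> x < y -> (r x < r y)%N.
Proof.
case: hr => h1 h2.
elim: n => [|n IH] x y.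
  by rewrite leqn0 => /eqP/card0_eq/(_ y); rewrite inE lexx.
move=> hc xy; case: (cover_exists xy) => b [xb cb].
rewrite (h2 _ _ cb) ltnS.
case: (eqVneq x b) => [->//|nxb].
have xb' : x < b by rewrite lt_neqAle nxb xb.
apply: ltnW; apply: (IH x b) xb'.
move: cb => /andP[by' _].
move: (proper_card (down_proper by')) => h; rewrite -ltnS; exact: leq_trans h hc.
Qed.

Lemma rank_lt x y : x < y -> (r x < r y)%N.
Proof. exact: (@rank_lt_n #|[set z | z <= y]|). Qed.

Lemma rank_le x y : x <= y -> (r x <= r y)%N.
Proof.
rewrite le_eqVlt => /orP[/eqP->//|/rank_lt]; exact: ltnW.
Qed.

Lemma rank_down (x : P) : (2 <= r x)%N -> exists b, covers x b /\ r b = (r x).-1.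
Proof.
case: hr => h1 h2 r2.
case: (boolP (is_minimal x)) => [/h1 hx|]; first by rewrite hx in r2.
move=> /forallPn [y]; rewrite negbK => yx.
case: (cover_exists yx) => b [_ cb]; exists b; split => //.
by rewrite (h2 _ _ cb).
Qed.

Definition step (z : P) : P := odflt z [pick b | covers z b].

Lemma step_le z : step z <= z.
Proof.
rewrite /step; case: pickP => [b /andP[/ltW ->]|] //= _; exact: lexx.
Qed.

Lemma iter_step_rank x i : (i < r x)%N -> r (iter i step x) = r x - i.
Proof.
case: hr => h1 h2.
elim: i => [|i IH] hi; first by rewrite subn0.
have hi' : (i < r x)%N by apply: ltnW.
rewrite iterS; have := IH hi'; set z := iter i step x => hz.
have z2 : (2 <= r z)%N by rewrite hz; lia.
rewrite /step; case: pickP => [b cb|] /=.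
  rewrite (h2 _ _ cb) in hz; by rewrite subnS -hz.
case: (rank_down z2) => b [cb _] /(_ b); by rewrite cb.
Qed.

Lemma iter_step_mono x i j : (i <= j)%N -> iter j step x <= iter i step x.
Proof.
move=> /subnK <-; elim: (j - i) => [|k IH]; first by rewrite add0n lexx.
rewrite addSn iterS; exact: le_trans (step_le _) IH.
Qed.

Definition chainC (x : P) : {set P} := [set iter (nat_of_ord i) step x | i : 'I_(r x)].

Lemma chainC_card x : #|chainC x| = r x.
Proof.
rewrite card_imset ?card_ord //.
move=> i j /= e.
have := iter_step_rank (ltn_ord i); have := iter_step_rank (ltn_ord j).
rewrite e => -> /eqP; rewrite eqn_sub2lE ?(ltnW (ltn_ord _)) //.
by move=> /eqP h; apply/val_inj; rewrite /= h.
Qed.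

Lemma chainC_max x : (forall v, ~~ (x < v)) -> is_max_chain (chainC x).
Proof.
move=> xmax.
have chC : is_chain (chainC x).
  apply/forallP=> a; apply/implyP=> /imsetP[i _ ->].
  apply/forallP=> b; apply/implyP=> /imsetP[j _ ->].
  case: (leqP i j) => h; first by rewrite (iter_step_mono x h) orbT.
  by rewrite (iter_step_mono x (ltnW h)).
rewrite /is_max_chain chC /=; apply/forallP=> D; apply/implyP=> /andP[chD sCD].
rewrite eqEsubset sCD andbT; apply/subsetP=> z zD.
have rx1 : (0 < r x)%N by apply: rank_ge1.
have xC : x \in chainC x by apply/imsetP; exists (Ordinal rx1).
have comp : forall a, a \in D -> (z <= a) || (a <= z).
  by move=> a aD; move/forallP: chD => /(_ z) /implyP /(_ zD) /forallP /(_ a) /implyP /(_ aD).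
have zx : z <= x.
  case/orP: (comp x (subsetP sCD _ xC)) => // xz.
  move: xz; rewrite le_eqVlt => /orP[/eqP->|xz]; first exact: lexx.
  by move: (xmax z); rewrite xz.
have rz := rank_le zx; have rz1 := rank_ge1 z.
have hi : (r x - r z < r x)%N by lia.
set c := iter (r x - r z) step x.
have cC : c \in chainC x by apply/imsetP; exists (Ordinal hi).
have rc : r c = r z by rewrite /c iter_step_rank // subKn.
case: (eqVneq z c) => [->//|nzc].
exfalso; case/orP: (comp c (subsetP sCD _ cC)) => h.
  have : z < c by rewrite lt_neqAle nzc h.
  by move/rank_lt; rewrite rc ltnn.
have : c < z by rewrite lt_neqAle eq_sym nzc h.
by move/rank_lt; rewrite rc ltnn.
Qed.

Hypothesis hg : graded P.

Lemma max_rank x : (forall v, ~~ (x < v)) -> r x = top_rank r.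
Proof.
move=> xmax.
have cP : (0 < #|P|)%N by apply/card_gt0P; exists x.
case: (@bigop.eq_bigmax P r cP) => w hw.
have wmax : forall v, ~~ (w < v).
  move=> v; apply/negP=> /rank_lt; rewrite -hw ltnNge.
  by rewrite (leq_bigmax_cond (F := r) (P := xpredT) v).
rewrite /top_rank hw -chainC_card -(chainC_card w).
by apply: hg; apply: chainC_max.
Qed.

Lemma up_rank_aux n : forall x y t, y <= x -> (r y <= t)%N -> r x = t + n ->
  exists z, y <= z /\ r z = t.
Proof.
elim: n => [|n IH] x y t yx ryt rx; first by exists x; rewrite rx addn0.
have yx' : y < x.
  rewrite lt_neqAle yx andbT; apply/eqP => e; move: rx; rewrite -e => e'.
  by move: ryt; rewrite e' addnS ltnNge leq_addr.
case: (cover_exists yx') => b [yb cb].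
apply: (IH b y t yb ryt).
case: hr => _ h2; move: rx; rewrite (h2 _ _ cb) addnS; by case.
Qed.

Lemma up_rank y t : (r y <= t)%N -> (t <= top_rank r)%N -> exists z, y <= z /\ r z = t.
Proof.
move=> ryt tt.
case: (max_above y) => x [yx xmax].
apply: (@up_rank_aux (r x - t) x y t yx ryt).
by rewrite subnKC // max_rank.
Qed.

End Aux.

Section Main.
Variables (disp : Order.disp_t) (P : finPOrderType disp) (r : P -> nat) (m : nat).
Hypothesis hr : rank_fun r.
Hypothesis hg : graded P.
Notation le := (@prodle m disp P).

Lemma le_trans_p : forall x y z, le x y -> le y z -> le x z.
Proof.
move=> [a b] [c d] [e f] /andP[/= h1 h2] /andP[/= h3 h4].
by rewrite /prodle /= (leq_trans h1 h3) (le_trans h2 h4).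
Qed.

Lemma Xmap_lower (I : {set 'I_m * P}) : lower_ideal le (Xmap le I).
Proof.
move=> x y yx; rewrite !inE => /existsP[z /andP[zm xz]].
apply/existsP; exists z; rewrite zm; exact: le_trans_p yx xz.
Qed.

Lemma fr_mem (I : {set 'I_m * P}) : full_rank r I -> forall j, exists k, (k <= top_rank r)%N /\
  forall a, ((j, a) \in I) = (r a <= k)%N.
Proof.
move=> fr j; case: (fr j) => k [kt hk]; exists k; split => // a.
have := congr1 (fun S : {set P} => a \in S) hk; by rewrite /= !inE.
Qed.

Lemma key (I : {set 'I_m * P}) j' a b : full_rank r I -> ((j', a) \in min_compl le I) -> r b = r a ->
  (j', b) \in min_compl le I.
Proof.
move=> fr; rewrite !inE => /andP[aI /forallP hmin'] rb.
have hmin : forall q, q \notin I -> le q (j', a) -> q = (j', a).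
  by move=> q qI lq; move: (hmin' q); rewrite qI lq => /eqP.
case: (fr_mem fr j') => k' [_ hk].
have ra : (k' < r a)%N by move: aI; rewrite hk ltnNge.
have ra1 : r a = k'.+1.
  apply/eqP; rewrite eqn_leq ra andbT leqNgt; apply/negP => ra2.
  have r2 : (2 <= r a)%N by apply: leq_ltn_trans ra2.
  case: (rank_down hr r2) => b0 [cb rb0].
  have b0I : (j', b0) \notin I by rewrite hk -ltnNge rb0; lia.
  have lb : le (j', b0) (j', a).
    by rewrite /prodle /= leqnn; move: cb => /andP[/ltW -> _].
  move: (hmin _ b0I lb) => [e]; move: cb => /andP[]; by rewrite e ltxx.
rewrite hk -ltnNge rb ra1 ltnSn /=.
apply/forallP => -[j'' b']; apply/implyP => /andP[qI /andP[/= hj hb]].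
case: (eqVneq j'' j') => [ej|nj].
  subst j''; case: (eqVneq b' b) => [->//|nb].
  have : (r b' < r b)%N by apply: rank_lt => //; rewrite lt_neqAle nb hb.
  by move: qI; rewrite hk rb ra1 ltnS => /negP.
exfalso.
have aI'' : (j'', a) \in I.
  apply/negPn/negP => h; move: (hmin _ h).
  by rewrite /prodle /= hj lexx => /(_ isT) [] /eqP; rewrite (negPf nj).
case: (fr_mem fr j'') => k'' [_ hk''].
move: aI''; rewrite hk'' => ak.
move: qI; rewrite hk'' => /negP; apply.
by rewrite (leq_trans (rank_le hr hb)) // rb.
Qed.

Lemma Xfull (I : {set 'I_m * P}) : full_rank r I -> full_rank r (Xmap le I).
Proof.
move=> fr j.
pose C := fun p : 'I_m * P => (p \in min_compl le I) && (j <= p.1)%N.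
have topb : forall p : 'I_m * P, (r p.2 <= top_rank r)%N.
  by move=> p; apply: (@bigop.leq_bigmax P r).
exists (\max_(p | C p) r p.2); split.
  by apply/bigmax_leqP => p _; apply: topb.
apply/setP => y; rewrite !inE; apply/idP/idP.
  move=> /existsP[[j' a] /andP[am /andP[/= hj hy]]].
  apply: leq_trans (rank_le hr hy) _.
  by apply: (@leq_bigmax_cond _ C (fun p => r p.2) (j', a)); rewrite /C am.
move=> hK.
case: (boolP [exists p, C p && (r y <= r p.2)%N]) => [/existsP[[j' a] /andP[/andP[am hj] hya]]|hno].
  case: (up_rank hr hg hya (topb (j', a))) => z [yz rz].
  apply/existsP; exists (j', z).
  by rewrite (key fr am rz) /prodle /= hj yz.
exfalso.
have : (\max_(p | C p) r p.2 <= (r y).-1)%N.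
  apply/bigmax_leqP => p cp; move: hno => /existsPn /(_ p); rewrite cp /= -ltnNge.
  by move=> h; rewrite -ltnS prednK ?(rank_ge1 hr).
move: hK; have := rank_ge1 hr y; lia.
Qed.

End Main.

Theorem lemma2p6 (disp : Order.disp_t) (P : finPOrderType disp) (r : P -> nat)
  (m : nat) (I : {set 'I_m * P}) :
  graded P -> rank_fun r -> (0 < m)%N ->
  lower_ideal (@prodle m disp P) I ->
  (full_rank r I <->
   forall n : nat, full_rank r (iter n (Xmap (@prodle m disp P)) I)).
Proof.
move=> hg hr _ hl; split; last by move=> /(_ 0%N).
move=> fr n; elim: n => [|n IH] //=.
exact: Xfull.
Qed.
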